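(* There exists a $(121,11;9)$ Heffter net over the additive group of $\mathbb F_{3^5}$.
   Context: A half-set of an abelian group $G$ of odd order $2v+1\ge7$ is a subset $V\subseteq G\setminus\{0\}$ containing exactly one element of each pair $\{g,-g\}$, $g\ne0$. A $(v,k)$ Heffter system on $V$ is a partition of $V$ into blocks of size $k$ each summing to $0$ in $G$. A $(k^2,k;r)$ Heffter net over $G$ (with $|G|=2k^2+1$) is a partial linear space (any two distinct points lie in at most one block) whose point set is a half-set $V$ of $G$, with a resolution of its blocks into $r$ parallel classes (each a partition of $V$), each of which is a $(k^2,k)$ Heffter system. *)

(* Defs.v *)
From HB Require Import structures.
From mathcomp Require Import all_boot all_order all_algebra all_field.
Set Warnings "-notation-overridden,-ambiguous-paths".

Set Implicit Arguments. Unset Strict Implicit. Unset Printing Implicit Defensive.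
Import GRing.Theory.
Local Open Scope ring_scope.

Definition half_set (G : finZmodType) (V : {set G}) : Prop :=
  0 \notin V /\ forall g : G, g != 0 -> (g \in V) != (- g \in V).

(* A (v,k) Heffter system on V: a partition of V into blocks of size k,
   each summing to 0 in G (v = #|V| is determined by V). *)
Definition heffter_system (G : finZmodType) (V : {set G}) (k : nat)
    (P : {set {set G}}) : Prop :=
  partition P V /\
  forall B, B \in P -> #|B| = k /\ \sum_(x in B) x = 0.

(* A (k^2,k;r) Heffter net over G: a half-set V of G (with |G| = 2k^2+1)
   together with r parallel classes P 0, ..., P (r-1), each a (k^2,k)
   Heffter system on V; the blocks (i, B) with B in P i form a partial
   linear space: two distinct points lie in at most one block (blocks are
   counted with their class, so distinct classes share no block). *)
Definition heffter_net (G : finZmodType) (k r : nat) (V : {set G})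
    (P : 'I_r -> {set {set G}}) : Prop :=
  #|G| = (2 * k ^ 2 + 1)%N /\
  half_set V /\
  (forall i, heffter_system V k (P i)) /\
  (forall (i j : 'I_r) (B B' : {set G}) (x y : G),
      B \in P i -> B' \in P j -> x != y ->
      x \in B -> y \in B -> x \in B' -> y \in B' ->
      i = j /\ B = B').

Definition has_heffter_net (G : finZmodType) (k r : nat) : Prop :=
  exists (V : {set G}) (P : 'I_r -> {set {set G}}), @heffter_net G k r V P.

(* Main.v *)
Require Import Defs.
From HB Require Import structures.
From mathcomp Require Import all_boot all_order all_algebra all_field.
Set Implicit Arguments. Unset Strict Implicit. Unset Printing Implicit Defensive.
Import GRing.Theory.
Local Open Scope ring_scope.

Definition code := seq nat.
Definition zero3 : code := [:: 0; 0; 0; 0; 0]%N.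
Definition add3 (c d : code) : code := map (fun p => (p.1 + p.2) %% 3)%N (zip c d).
Definition neg3 (c : code) : code := map (fun a => (3 - a) %% 3)%N c.
Definition valid (c : code) := (size c == 5%N) && all (fun a => a < 3)%N c.
Definition sum3 (b : seq code) := foldr add3 zero3 b.

Definition enc (c : code) : 'rV['F_3]_5 := \row_(k < 5) ((nth 0%N c k)%:R).

Lemma Fp3_mod n : (((n %% 3)%N)%:R : 'F_3) = n%:R.
Proof. by apply: val_inj; rewrite /= !(@val_Fp_nat 3) // modn_mod. Qed.

Lemma Fp3_inj a b : (a < 3)%N -> (b < 3)%N -> (a%:R : 'F_3) = b%:R -> a = b.
Proof.
move=> ha hb /(congr1 val); rewrite /= !(@val_Fp_nat 3) // !modn_small //.
Qed.

Lemma enc_add c d : size c = 5%N -> size d = 5%N -> enc (add3 c d) = enc c + enc d.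
Proof.
move=> hc hd; apply/rowP => k; rewrite !mxE /add3.
rewrite (nth_map (0,0)%N); last by rewrite size_zip hc hd minnn.
by rewrite nth_zip ?hc ?hd //= Fp3_mod natrD.
Qed.

Lemma size_add3 c d : size c = 5%N -> size d = 5%N -> size (add3 c d) = 5%N.
Proof. by move=> hc hd; rewrite size_map size_zip hc hd. Qed.

Lemma enc_zero : enc zero3 = 0.
Proof. by apply/rowP => k; rewrite !mxE; case: k => [[|[|[|[|[|]]]]]]. Qed.

Lemma enc_inj c d : valid c -> valid d -> enc c = enc d -> c = d.
Proof.
move=> /andP[/eqP sc ac] /andP[/eqP sd ad] e.
apply: (@eq_from_nth _ 0%N); first by rewrite sc sd.
move=> i; rewrite sc => hi.
have := congr1 (fun m : 'rV['F_3]_5 => m 0 (Ordinal hi)) e; rewrite !mxE /= => h.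
apply: Fp3_inj h; [apply: (allP ac); apply: mem_nth; rewrite sc //
                  |apply: (allP ad); apply: mem_nth; rewrite sd //].
Qed.

Lemma enc_surj (r : 'rV['F_3]_5) : exists c, valid c /\ enc c = r.
Proof.
exists [seq val (r 0 k) | k <- enum 'I_5]; split.
  rewrite /valid size_map size_enum_ord eqxx /=; apply/allP => x /mapP[k _ ->].
  exact: ltn_ord.
apply/rowP => k; rewrite mxE (nth_map ord0) ?size_enum_ord //.
by rewrite nth_ord_enum natr_Zp.
Qed.

Section Phi.
Variable F : finFieldType.
Variable g : 'rV['F_3]_5 -> F.
Hypothesis gD : forall a b, g (a + b) = g a + g b.
Hypothesis g_inj : injective g.
Hypothesis g_surj : forall x, exists r, g r = x.

Definition phi c := g (enc c).

Lemma g0 : g 0 = 0.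
Proof. have := gD 0 0; rewrite addr0 => h. by apply: (@addrI _ (g 0)); rewrite -h addr0. Qed.
End Phi.

Fixpoint codes (n : nat) : seq code :=
  if n is n'.+1 then [seq a :: c | a <- iota 0 3, c <- codes n'] else [:: [::]].

Lemma codes_mem n c : size c = n -> all (fun a => a < 3)%N c -> c \in codes n.
Proof.
elim: n c => [|n IH] [|a c] //= [hs] /andP[ha hc].
have h1 : a \in iota 0 3 by rewrite mem_iota.
exact: (@allpairs_f _ _ _ (fun a c => a :: c) _ _ _ _ h1 (IH c hs hc)).
Qed.

Lemma add3_neg c : all (fun a => a < 3)%N c -> add3 c (neg3 c) = nseq (size c) 0%N.
Proof.
elim: c => [|a c IH] //= /andP[ha hc].
by rewrite /add3 /= in IH *; rewrite IH //; case: a ha => [|[|[|]]].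
Qed.
Definition net : seq (seq (seq (seq nat))) := [::
  [::[::[::1;2;2;2;0];[::0;1;2;1;0];[::1;1;1;1;2];[::0;2;2;2;1];[::1;0;0;1;2];[::0;1;2;1;2];[::2;0;1;1;0];[::0;1;2;0;0];[::0;1;1;0;1];[::2;2;0;1;1];[::2;1;2;2;0]];
    [::[::2;1;1;2;0];[::1;2;1;0;1];[::0;2;1;0;1];[::2;0;2;0;1];[::1;2;0;1;0];[::2;1;0;2;1];[::0;0;0;1;1];[::0;1;0;1;0];[::1;1;2;0;1];[::0;1;0;0;0];[::0;1;2;2;0]];
    [::[::2;0;1;0;0];[::2;1;2;2;2];[::2;1;2;2;1];[::0;0;2;2;2];[::0;2;2;0;1];[::2;0;0;2;0];[::1;1;1;2;2];[::1;2;2;0;2];[::2;0;2;2;2];[::2;0;0;0;1];[::1;2;1;0;2]];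
    [::[::0;1;0;1;1];[::0;2;2;0;0];[::0;2;0;2;1];[::1;0;1;0;1];[::0;0;0;2;1];[::1;1;0;2;1];[::2;1;1;1;1];[::2;0;1;2;2];[::2;0;2;1;2];[::1;0;0;2;0];[::0;2;2;2;2]];
    [::[::0;1;2;2;1];[::1;2;1;2;2];[::1;0;1;2;2];[::1;1;0;1;2];[::0;2;1;0;2];[::1;1;2;0;0];[::1;0;0;0;1];[::0;0;2;0;2];[::1;2;2;1;2];[::0;0;2;0;0];[::0;0;2;1;1]];
    [::[::2;1;0;1;2];[::1;1;0;0;2];[::2;2;1;2;1];[::0;1;0;2;0];[::2;1;2;1;2];[::1;1;2;1;0];[::2;0;0;1;2];[::1;0;1;1;2];[::0;1;0;0;1];[::2;2;2;2;2];[::2;2;1;1;1]];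
    [::[::1;2;2;1;1];[::1;2;2;0;1];[::0;2;2;2;0];[::2;2;0;1;0];[::0;0;2;2;1];[::1;1;2;0;2];[::2;2;0;0;2];[::0;2;2;1;1];[::0;0;0;0;1];[::2;1;0;0;2];[::0;1;0;2;1]];
    [::[::1;2;0;0;2];[::2;0;0;1;1];[::2;2;1;1;0];[::0;0;0;1;0];[::1;0;0;1;1];[::1;0;2;1;0];[::2;2;1;2;2];[::2;2;0;2;2];[::2;2;2;0;0];[::2;0;1;2;1];[::0;2;2;1;0]];
    [::[::1;0;0;0;0];[::1;2;2;0;0];[::1;1;2;2;1];[::2;1;0;2;2];[::2;1;0;1;0];[::0;2;0;0;1];[::2;0;1;1;2];[::1;0;2;0;1];[::0;0;1;1;0];[::1;0;1;0;0];[::1;2;0;2;2]];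
    [::[::1;1;0;0;0];[::1;0;1;2;0];[::0;2;0;1;1];[::0;0;1;2;0];[::2;0;1;1;1];[::2;2;2;0;2];[::0;2;1;2;2];[::0;1;2;2;2];[::0;0;1;2;1];[::1;1;1;1;0];[::2;0;2;2;0]];
    [::[::1;1;1;0;2];[::2;2;2;1;0];[::0;0;1;0;2];[::1;2;1;2;0];[::0;1;1;2;1];[::1;2;0;0;0];[::1;1;0;1;0];[::2;0;1;0;1];[::1;2;2;2;1];[::2;2;2;1;2];[::1;2;1;0;0]]];
  [::[::[::1;2;2;2;0];[::2;1;1;2;0];[::2;0;1;0;0];[::0;1;0;1;1];[::0;1;2;2;1];[::2;1;0;1;2];[::1;2;2;1;1];[::1;2;0;0;2];[::1;0;0;0;0];[::1;1;0;0;0];[::1;1;1;0;2]];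
    [::[::0;1;2;1;0];[::1;2;1;0;1];[::2;1;2;2;2];[::0;2;2;0;0];[::1;2;1;2;2];[::1;1;0;0;2];[::1;2;2;0;1];[::2;0;0;1;1];[::1;2;2;0;0];[::1;0;1;2;0];[::2;2;2;1;0]];
    [::[::1;1;1;1;2];[::0;2;1;0;1];[::2;1;2;2;1];[::0;2;0;2;1];[::1;0;1;2;2];[::2;2;1;2;1];[::0;2;2;2;0];[::2;2;1;1;0];[::1;1;2;2;1];[::0;2;0;1;1];[::0;0;1;0;2]];
    [::[::0;2;2;2;1];[::2;0;2;0;1];[::0;0;2;2;2];[::1;0;1;0;1];[::1;1;0;1;2];[::0;1;0;2;0];[::2;2;0;1;0];[::0;0;0;1;0];[::2;1;0;2;2];[::0;0;1;2;0];[::1;2;1;2;0]];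
    [::[::1;0;0;1;2];[::1;2;0;1;0];[::0;2;2;0;1];[::0;0;0;2;1];[::0;2;1;0;2];[::2;1;2;1;2];[::0;0;2;2;1];[::1;0;0;1;1];[::2;1;0;1;0];[::2;0;1;1;1];[::0;1;1;2;1]];
    [::[::0;1;2;1;2];[::2;1;0;2;1];[::2;0;0;2;0];[::1;1;0;2;1];[::1;1;2;0;0];[::1;1;2;1;0];[::1;1;2;0;2];[::1;0;2;1;0];[::0;2;0;0;1];[::2;2;2;0;2];[::1;2;0;0;0]];
    [::[::2;0;1;1;0];[::0;0;0;1;1];[::1;1;1;2;2];[::2;1;1;1;1];[::1;0;0;0;1];[::2;0;0;1;2];[::2;2;0;0;2];[::2;2;1;2;2];[::2;0;1;1;2];[::0;2;1;2;2];[::1;1;0;1;0]];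
    [::[::0;1;2;0;0];[::0;1;0;1;0];[::1;2;2;0;2];[::2;0;1;2;2];[::0;0;2;0;2];[::1;0;1;1;2];[::0;2;2;1;1];[::2;2;0;2;2];[::1;0;2;0;1];[::0;1;2;2;2];[::2;0;1;0;1]];
    [::[::0;1;1;0;1];[::1;1;2;0;1];[::2;0;2;2;2];[::2;0;2;1;2];[::1;2;2;1;2];[::0;1;0;0;1];[::0;0;0;0;1];[::2;2;2;0;0];[::0;0;1;1;0];[::0;0;1;2;1];[::1;2;2;2;1]];
    [::[::2;2;0;1;1];[::0;1;0;0;0];[::2;0;0;0;1];[::1;0;0;2;0];[::0;0;2;0;0];[::2;2;2;2;2];[::2;1;0;0;2];[::2;0;1;2;1];[::1;0;1;0;0];[::1;1;1;1;0];[::2;2;2;1;2]];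
    [::[::2;1;2;2;0];[::0;1;2;2;0];[::1;2;1;0;2];[::0;2;2;2;2];[::0;0;2;1;1];[::2;2;1;1;1];[::0;1;0;2;1];[::0;2;2;1;0];[::1;2;0;2;2];[::2;0;2;2;0];[::1;2;1;0;0]]];
  [::[::[::1;2;2;2;0];[::1;2;1;0;1];[::2;1;2;2;1];[::1;0;1;0;1];[::0;2;1;0;2];[::1;1;2;1;0];[::2;2;0;0;2];[::2;2;0;2;2];[::0;0;1;1;0];[::1;1;1;1;0];[::1;2;1;0;0]];
    [::[::0;1;2;1;0];[::0;2;1;0;1];[::0;0;2;2;2];[::0;0;0;2;1];[::1;1;2;0;0];[::2;0;0;1;2];[::0;2;2;1;1];[::2;2;2;0;0];[::1;0;1;0;0];[::2;0;2;2;0];[::1;1;1;0;2]];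
    [::[::1;1;1;1;2];[::2;0;2;0;1];[::0;2;2;0;1];[::1;1;0;2;1];[::1;0;0;0;1];[::1;0;1;1;2];[::0;0;0;0;1];[::2;0;1;2;1];[::1;2;0;2;2];[::1;1;0;0;0];[::2;2;2;1;0]];
    [::[::0;2;2;2;1];[::1;2;0;1;0];[::2;0;0;2;0];[::2;1;1;1;1];[::0;0;2;0;2];[::0;1;0;0;1];[::2;1;0;0;2];[::0;2;2;1;0];[::1;0;0;0;0];[::1;0;1;2;0];[::0;0;1;0;2]];
    [::[::1;0;0;1;2];[::2;1;0;2;1];[::1;1;1;2;2];[::2;0;1;2;2];[::1;2;2;1;2];[::2;2;2;2;2];[::0;1;0;2;1];[::1;2;0;0;2];[::1;2;2;0;0];[::0;2;0;1;1];[::1;2;1;2;0]];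
    [::[::0;1;2;1;2];[::0;0;0;1;1];[::1;2;2;0;2];[::2;0;2;1;2];[::0;0;2;0;0];[::2;2;1;1;1];[::1;2;2;1;1];[::2;0;0;1;1];[::1;1;2;2;1];[::0;0;1;2;0];[::0;1;1;2;1]];
    [::[::2;0;1;1;0];[::0;1;0;1;0];[::2;0;2;2;2];[::1;0;0;2;0];[::0;0;2;1;1];[::2;1;0;1;2];[::1;2;2;0;1];[::2;2;1;1;0];[::2;1;0;2;2];[::2;0;1;1;1];[::1;2;0;0;0]];
    [::[::0;1;2;0;0];[::1;1;2;0;1];[::2;0;0;0;1];[::0;2;2;2;2];[::0;1;2;2;1];[::1;1;0;0;2];[::0;2;2;2;0];[::0;0;0;1;0];[::2;1;0;1;0];[::2;2;2;0;2];[::1;1;0;1;0]];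
    [::[::0;1;1;0;1];[::0;1;0;0;0];[::1;2;1;0;2];[::0;1;0;1;1];[::1;2;1;2;2];[::2;2;1;2;1];[::2;2;0;1;0];[::1;0;0;1;1];[::0;2;0;0;1];[::0;2;1;2;2];[::2;0;1;0;1]];
    [::[::2;2;0;1;1];[::0;1;2;2;0];[::2;0;1;0;0];[::0;2;2;0;0];[::1;0;1;2;2];[::0;1;0;2;0];[::0;0;2;2;1];[::1;0;2;1;0];[::2;0;1;1;2];[::0;1;2;2;2];[::1;2;2;2;1]];
    [::[::2;1;2;2;0];[::2;1;1;2;0];[::2;1;2;2;2];[::0;2;0;2;1];[::1;1;0;1;2];[::2;1;2;1;2];[::1;1;2;0;2];[::2;2;1;2;2];[::1;0;2;0;1];[::0;0;1;2;1];[::2;2;2;1;2]]];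
  [::[::[::1;2;2;2;0];[::0;2;1;0;1];[::0;2;2;0;1];[::2;1;1;1;1];[::1;2;2;1;2];[::2;2;1;1;1];[::1;2;2;0;1];[::0;0;0;1;0];[::0;2;0;0;1];[::0;1;2;2;2];[::2;2;2;1;2]];
    [::[::0;1;2;1;0];[::2;0;2;0;1];[::2;0;0;2;0];[::2;0;1;2;2];[::0;0;2;0;0];[::2;1;0;1;2];[::0;2;2;2;0];[::1;0;0;1;1];[::2;0;1;1;2];[::0;0;1;2;1];[::1;2;1;0;0]];
    [::[::1;1;1;1;2];[::1;2;0;1;0];[::1;1;1;2;2];[::2;0;2;1;2];[::0;0;2;1;1];[::1;1;0;0;2];[::2;2;0;1;0];[::1;0;2;1;0];[::1;0;2;0;1];[::1;1;1;1;0];[::1;1;1;0;2]];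
    [::[::0;2;2;2;1];[::2;1;0;2;1];[::1;2;2;0;2];[::1;0;0;2;0];[::0;1;2;2;1];[::2;2;1;2;1];[::0;0;2;2;1];[::2;2;1;2;2];[::0;0;1;1;0];[::2;0;2;2;0];[::2;2;2;1;0]];
    [::[::1;0;0;1;2];[::0;0;0;1;1];[::2;0;2;2;2];[::0;2;2;2;2];[::1;2;1;2;2];[::0;1;0;2;0];[::1;1;2;0;2];[::2;2;0;2;2];[::1;0;1;0;0];[::1;1;0;0;0];[::0;0;1;0;2]];
    [::[::0;1;2;1;2];[::0;1;0;1;0];[::2;0;0;0;1];[::0;1;0;1;1];[::1;0;1;2;2];[::2;1;2;1;2];[::2;2;0;0;2];[::2;2;2;0;0];[::1;2;0;2;2];[::1;0;1;2;0];[::1;2;1;2;0]];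
    [::[::2;0;1;1;0];[::1;1;2;0;1];[::1;2;1;0;2];[::0;2;2;0;0];[::1;1;0;1;2];[::1;1;2;1;0];[::0;2;2;1;1];[::2;0;1;2;1];[::1;0;0;0;0];[::0;2;0;1;1];[::0;1;1;2;1]];
    [::[::0;1;2;0;0];[::0;1;0;0;0];[::2;0;1;0;0];[::0;2;0;2;1];[::0;2;1;0;2];[::2;0;0;1;2];[::0;0;0;0;1];[::0;2;2;1;0];[::1;2;2;0;0];[::0;0;1;2;0];[::1;2;0;0;0]];
    [::[::0;1;1;0;1];[::0;1;2;2;0];[::2;1;2;2;2];[::1;0;1;0;1];[::1;1;2;0;0];[::1;0;1;1;2];[::2;1;0;0;2];[::1;2;0;0;2];[::1;1;2;2;1];[::2;0;1;1;1];[::1;1;0;1;0]];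
    [::[::2;2;0;1;1];[::2;1;1;2;0];[::2;1;2;2;1];[::0;0;0;2;1];[::1;0;0;0;1];[::0;1;0;0;1];[::0;1;0;2;1];[::2;0;0;1;1];[::2;1;0;2;2];[::2;2;2;0;2];[::2;0;1;0;1]];
    [::[::2;1;2;2;0];[::1;2;1;0;1];[::0;0;2;2;2];[::1;1;0;2;1];[::0;0;2;0;2];[::2;2;2;2;2];[::1;2;2;1;1];[::2;2;1;1;0];[::2;1;0;1;0];[::0;2;1;2;2];[::1;2;2;2;1]]];
  [::[::[::1;2;2;2;0];[::2;0;2;0;1];[::1;1;1;2;2];[::1;0;0;2;0];[::1;2;1;2;2];[::2;1;2;1;2];[::0;2;2;1;1];[::0;2;2;1;0];[::1;1;2;2;1];[::2;2;2;0;2];[::1;2;2;2;1]];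
    [::[::0;1;2;1;0];[::1;2;0;1;0];[::1;2;2;0;2];[::0;2;2;2;2];[::1;0;1;2;2];[::1;1;2;1;0];[::0;0;0;0;1];[::1;2;0;0;2];[::2;1;0;2;2];[::0;2;1;2;2];[::2;2;2;1;2]];
    [::[::1;1;1;1;2];[::2;1;0;2;1];[::2;0;2;2;2];[::0;1;0;1;1];[::1;1;0;1;2];[::2;0;0;1;2];[::2;1;0;0;2];[::2;0;0;1;1];[::2;1;0;1;0];[::0;1;2;2;2];[::1;2;1;0;0]];
    [::[::0;2;2;2;1];[::0;0;0;1;1];[::2;0;0;0;1];[::0;2;2;0;0];[::0;2;1;0;2];[::1;0;1;1;2];[::0;1;0;2;1];[::2;2;1;1;0];[::0;2;0;0;1];[::0;0;1;2;1];[::1;1;1;0;2]];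
    [::[::1;0;0;1;2];[::0;1;0;1;0];[::1;2;1;0;2];[::0;2;0;2;1];[::1;1;2;0;0];[::0;1;0;0;1];[::1;2;2;1;1];[::0;0;0;1;0];[::2;0;1;1;2];[::1;1;1;1;0];[::2;2;2;1;0]];
    [::[::0;1;2;1;2];[::1;1;2;0;1];[::2;0;1;0;0];[::1;0;1;0;1];[::1;0;0;0;1];[::2;2;2;2;2];[::1;2;2;0;1];[::1;0;0;1;1];[::1;0;2;0;1];[::2;0;2;2;0];[::0;0;1;0;2]];
    [::[::2;0;1;1;0];[::0;1;0;0;0];[::2;1;2;2;2];[::0;0;0;2;1];[::0;0;2;0;2];[::2;2;1;1;1];[::0;2;2;2;0];[::1;0;2;1;0];[::0;0;1;1;0];[::1;1;0;0;0];[::1;2;1;2;0]];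
    [::[::0;1;2;0;0];[::0;1;2;2;0];[::2;1;2;2;1];[::1;1;0;2;1];[::1;2;2;1;2];[::2;1;0;1;2];[::2;2;0;1;0];[::2;2;1;2;2];[::1;0;1;0;0];[::1;0;1;2;0];[::0;1;1;2;1]];
    [::[::0;1;1;0;1];[::2;1;1;2;0];[::0;0;2;2;2];[::2;1;1;1;1];[::0;0;2;0;0];[::1;1;0;0;2];[::0;0;2;2;1];[::2;2;0;2;2];[::1;2;0;2;2];[::0;2;0;1;1];[::1;2;0;0;0]];
    [::[::2;2;0;1;1];[::1;2;1;0;1];[::0;2;2;0;1];[::2;0;1;2;2];[::0;0;2;1;1];[::2;2;1;2;1];[::1;1;2;0;2];[::2;2;2;0;0];[::1;0;0;0;0];[::0;0;1;2;0];[::1;1;0;1;0]];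
    [::[::2;1;2;2;0];[::0;2;1;0;1];[::2;0;0;2;0];[::2;0;2;1;2];[::0;1;2;2;1];[::0;1;0;2;0];[::2;2;0;0;2];[::2;0;1;2;1];[::1;2;2;0;0];[::2;0;1;1;1];[::2;0;1;0;1]]];
  [::[::[::1;2;2;2;0];[::1;2;0;1;0];[::2;0;2;2;2];[::0;2;2;0;0];[::1;1;2;0;0];[::2;2;2;2;2];[::0;2;2;2;0];[::2;2;1;2;2];[::1;2;0;2;2];[::0;0;1;2;0];[::2;0;1;0;1]];
    [::[::0;1;2;1;0];[::2;1;0;2;1];[::2;0;0;0;1];[::0;2;0;2;1];[::1;0;0;0;1];[::2;2;1;1;1];[::2;2;0;1;0];[::2;2;0;2;2];[::1;0;0;0;0];[::2;0;1;1;1];[::1;2;2;2;1]];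
    [::[::1;1;1;1;2];[::0;0;0;1;1];[::1;2;1;0;2];[::1;0;1;0;1];[::0;0;2;0;2];[::2;1;0;1;2];[::0;0;2;2;1];[::2;2;2;0;0];[::1;2;2;0;0];[::2;2;2;0;2];[::2;2;2;1;2]];
    [::[::0;2;2;2;1];[::0;1;0;1;0];[::2;0;1;0;0];[::0;0;0;2;1];[::1;2;2;1;2];[::1;1;0;0;2];[::1;1;2;0;2];[::2;0;1;2;1];[::1;1;2;2;1];[::0;2;1;2;2];[::1;2;1;0;0]];
    [::[::1;0;0;1;2];[::1;1;2;0;1];[::2;1;2;2;2];[::1;1;0;2;1];[::0;0;2;0;0];[::2;2;1;2;1];[::2;2;0;0;2];[::0;2;2;1;0];[::2;1;0;2;2];[::0;1;2;2;2];[::1;1;1;0;2]];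
    [::[::0;1;2;1;2];[::0;1;0;0;0];[::2;1;2;2;1];[::2;1;1;1;1];[::0;0;2;1;1];[::0;1;0;2;0];[::0;2;2;1;1];[::1;2;0;0;2];[::2;1;0;1;0];[::0;0;1;2;1];[::2;2;2;1;0]];
    [::[::2;0;1;1;0];[::0;1;2;2;0];[::0;0;2;2;2];[::2;0;1;2;2];[::0;1;2;2;1];[::2;1;2;1;2];[::0;0;0;0;1];[::2;0;0;1;1];[::0;2;0;0;1];[::1;1;1;1;0];[::0;0;1;0;2]];
    [::[::0;1;2;0;0];[::2;1;1;2;0];[::0;2;2;0;1];[::2;0;2;1;2];[::1;2;1;2;2];[::1;1;2;1;0];[::2;1;0;0;2];[::2;2;1;1;0];[::2;0;1;1;2];[::2;0;2;2;0];[::1;2;1;2;0]];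
    [::[::0;1;1;0;1];[::1;2;1;0;1];[::2;0;0;2;0];[::1;0;0;2;0];[::1;0;1;2;2];[::2;0;0;1;2];[::0;1;0;2;1];[::0;0;0;1;0];[::1;0;2;0;1];[::1;1;0;0;0];[::0;1;1;2;1]];
    [::[::2;2;0;1;1];[::0;2;1;0;1];[::1;1;1;2;2];[::0;2;2;2;2];[::1;1;0;1;2];[::1;0;1;1;2];[::1;2;2;1;1];[::1;0;0;1;1];[::0;0;1;1;0];[::1;0;1;2;0];[::1;2;0;0;0]];
    [::[::2;1;2;2;0];[::2;0;2;0;1];[::1;2;2;0;2];[::0;1;0;1;1];[::0;2;1;0;2];[::0;1;0;0;1];[::1;2;2;0;1];[::1;0;2;1;0];[::1;0;1;0;0];[::0;2;0;1;1];[::1;1;0;1;0]]];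
  [::[::[::1;2;2;2;0];[::2;1;0;2;1];[::1;2;1;0;2];[::0;0;0;2;1];[::0;0;2;0;0];[::0;1;0;2;0];[::0;0;0;0;1];[::2;2;1;1;0];[::1;0;2;0;1];[::1;0;1;2;0];[::1;1;0;1;0]];
    [::[::0;1;2;1;0];[::0;0;0;1;1];[::2;0;1;0;0];[::1;1;0;2;1];[::0;0;2;1;1];[::2;1;2;1;2];[::2;1;0;0;2];[::0;0;0;1;0];[::0;0;1;1;0];[::0;2;0;1;1];[::2;0;1;0;1]];
    [::[::1;1;1;1;2];[::0;1;0;1;0];[::2;1;2;2;2];[::2;1;1;1;1];[::0;1;2;2;1];[::1;1;2;1;0];[::0;1;0;2;1];[::1;0;0;1;1];[::1;0;1;0;0];[::0;0;1;2;0];[::1;2;2;2;1]];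
    [::[::0;2;2;2;1];[::1;1;2;0;1];[::2;1;2;2;1];[::2;0;1;2;2];[::1;2;1;2;2];[::2;0;0;1;2];[::1;2;2;1;1];[::1;0;2;1;0];[::1;2;0;2;2];[::2;0;1;1;1];[::2;2;2;1;2]];
    [::[::1;0;0;1;2];[::0;1;0;0;0];[::0;0;2;2;2];[::2;0;2;1;2];[::1;0;1;2;2];[::1;0;1;1;2];[::1;2;2;0;1];[::2;2;1;2;2];[::1;0;0;0;0];[::2;2;2;0;2];[::1;2;1;0;0]];
    [::[::0;1;2;1;2];[::0;1;2;2;0];[::0;2;2;0;1];[::1;0;0;2;0];[::1;1;0;1;2];[::0;1;0;0;1];[::0;2;2;2;0];[::2;2;0;2;2];[::1;2;2;0;0];[::0;2;1;2;2];[::1;1;1;0;2]];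
    [::[::2;0;1;1;0];[::2;1;1;2;0];[::2;0;0;2;0];[::0;2;2;2;2];[::0;2;1;0;2];[::2;2;2;2;2];[::2;2;0;1;0];[::2;2;2;0;0];[::1;1;2;2;1];[::0;1;2;2;2];[::2;2;2;1;0]];
    [::[::0;1;2;0;0];[::1;2;1;0;1];[::1;1;1;2;2];[::0;1;0;1;1];[::1;1;2;0;0];[::2;2;1;1;1];[::0;0;2;2;1];[::2;0;1;2;1];[::2;1;0;2;2];[::0;0;1;2;1];[::0;0;1;0;2]];
    [::[::0;1;1;0;1];[::0;2;1;0;1];[::1;2;2;0;2];[::0;2;2;0;0];[::1;0;0;0;1];[::2;1;0;1;2];[::1;1;2;0;2];[::0;2;2;1;0];[::2;1;0;1;0];[::1;1;1;1;0];[::1;2;1;2;0]];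
    [::[::2;2;0;1;1];[::2;0;2;0;1];[::2;0;2;2;2];[::0;2;0;2;1];[::0;0;2;0;2];[::1;1;0;0;2];[::2;2;0;0;2];[::1;2;0;0;2];[::0;2;0;0;1];[::2;0;2;2;0];[::0;1;1;2;1]];
    [::[::2;1;2;2;0];[::1;2;0;1;0];[::2;0;0;0;1];[::1;0;1;0;1];[::1;2;2;1;2];[::2;2;1;2;1];[::0;2;2;1;1];[::2;0;0;1;1];[::2;0;1;1;2];[::1;1;0;0;0];[::1;2;0;0;0]]];
  [::[::[::1;2;2;2;0];[::0;0;0;1;1];[::2;1;2;2;2];[::2;0;1;2;2];[::1;0;1;2;2];[::0;1;0;0;1];[::2;2;0;1;0];[::2;0;1;2;1];[::2;1;0;1;0];[::2;0;2;2;0];[::1;2;0;0;0]];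
    [::[::0;1;2;1;0];[::0;1;0;1;0];[::2;1;2;2;1];[::2;0;2;1;2];[::1;1;0;1;2];[::2;2;2;2;2];[::0;0;2;2;1];[::0;2;2;1;0];[::0;2;0;0;1];[::1;1;0;0;0];[::1;1;0;1;0]];
    [::[::1;1;1;1;2];[::1;1;2;0;1];[::0;0;2;2;2];[::1;0;0;2;0];[::0;2;1;0;2];[::2;2;1;1;1];[::1;1;2;0;2];[::1;2;0;0;2];[::2;0;1;1;2];[::1;0;1;2;0];[::2;0;1;0;1]];
    [::[::0;2;2;2;1];[::0;1;0;0;0];[::0;2;2;0;1];[::0;2;2;2;2];[::1;1;2;0;0];[::2;1;0;1;2];[::2;2;0;0;2];[::2;0;0;1;1];[::1;0;2;0;1];[::0;2;0;1;1];[::1;2;2;2;1]];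
    [::[::1;0;0;1;2];[::0;1;2;2;0];[::2;0;0;2;0];[::0;1;0;1;1];[::1;0;0;0;1];[::1;1;0;0;2];[::0;2;2;1;1];[::2;2;1;1;0];[::0;0;1;1;0];[::0;0;1;2;0];[::2;2;2;1;2]];
    [::[::0;1;2;1;2];[::2;1;1;2;0];[::1;1;1;2;2];[::0;2;2;0;0];[::0;0;2;0;2];[::2;2;1;2;1];[::0;0;0;0;1];[::0;0;0;1;0];[::1;0;1;0;0];[::2;0;1;1;1];[::1;2;1;0;0]];
    [::[::2;0;1;1;0];[::1;2;1;0;1];[::1;2;2;0;2];[::0;2;0;2;1];[::1;2;2;1;2];[::0;1;0;2;0];[::2;1;0;0;2];[::1;0;0;1;1];[::1;2;0;2;2];[::2;2;2;0;2];[::1;1;1;0;2]];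
    [::[::0;1;2;0;0];[::0;2;1;0;1];[::2;0;2;2;2];[::1;0;1;0;1];[::0;0;2;0;0];[::2;1;2;1;2];[::0;1;0;2;1];[::1;0;2;1;0];[::1;0;0;0;0];[::0;2;1;2;2];[::2;2;2;1;0]];
    [::[::0;1;1;0;1];[::2;0;2;0;1];[::2;0;0;0;1];[::0;0;0;2;1];[::0;0;2;1;1];[::1;1;2;1;0];[::1;2;2;1;1];[::2;2;1;2;2];[::1;2;2;0;0];[::0;1;2;2;2];[::0;0;1;0;2]];
    [::[::2;2;0;1;1];[::1;2;0;1;0];[::1;2;1;0;2];[::1;1;0;2;1];[::0;1;2;2;1];[::2;0;0;1;2];[::1;2;2;0;1];[::2;2;0;2;2];[::1;1;2;2;1];[::0;0;1;2;1];[::1;2;1;2;0]];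
    [::[::2;1;2;2;0];[::2;1;0;2;1];[::2;0;1;0;0];[::2;1;1;1;1];[::1;2;1;2;2];[::1;0;1;1;2];[::0;2;2;2;0];[::2;2;2;0;0];[::2;1;0;2;2];[::1;1;1;1;0];[::0;1;1;2;1]]];
  [::[::[::1;2;2;2;0];[::1;1;2;0;1];[::2;0;0;2;0];[::0;2;0;2;1];[::0;0;2;1;1];[::1;0;1;1;2];[::0;0;2;2;1];[::2;0;0;1;1];[::1;0;1;0;0];[::0;2;1;2;2];[::1;2;1;2;0]];
    [::[::0;1;2;1;0];[::0;1;0;0;0];[::1;1;1;2;2];[::1;0;1;0;1];[::0;1;2;2;1];[::0;1;0;0;1];[::1;1;2;0;2];[::2;2;1;1;0];[::1;2;0;2;2];[::0;1;2;2;2];[::0;1;1;2;1]];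
    [::[::1;1;1;1;2];[::0;1;2;2;0];[::1;2;2;0;2];[::0;0;0;2;1];[::1;2;1;2;2];[::2;2;2;2;2];[::2;2;0;0;2];[::0;0;0;1;0];[::1;0;0;0;0];[::0;0;1;2;1];[::1;2;0;0;0]];
    [::[::0;2;2;2;1];[::2;1;1;2;0];[::2;0;2;2;2];[::1;1;0;2;1];[::1;0;1;2;2];[::2;2;1;1;1];[::0;2;2;1;1];[::1;0;0;1;1];[::1;2;2;0;0];[::1;1;1;1;0];[::1;1;0;1;0]];
    [::[::1;0;0;1;2];[::1;2;1;0;1];[::2;0;0;0;1];[::2;1;1;1;1];[::1;1;0;1;2];[::2;1;0;1;2];[::0;0;0;0;1];[::1;0;2;1;0];[::1;1;2;2;1];[::2;0;2;2;0];[::2;0;1;0;1]];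
    [::[::0;1;2;1;2];[::0;2;1;0;1];[::1;2;1;0;2];[::2;0;1;2;2];[::0;2;1;0;2];[::1;1;0;0;2];[::2;1;0;0;2];[::2;2;1;2;2];[::2;1;0;2;2];[::1;1;0;0;0];[::1;2;2;2;1]];
    [::[::2;0;1;1;0];[::2;0;2;0;1];[::2;0;1;0;0];[::2;0;2;1;2];[::1;1;2;0;0];[::2;2;1;2;1];[::0;1;0;2;1];[::2;2;0;2;2];[::2;1;0;1;0];[::1;0;1;2;0];[::2;2;2;1;2]];
    [::[::0;1;2;0;0];[::1;2;0;1;0];[::2;1;2;2;2];[::1;0;0;2;0];[::1;0;0;0;1];[::0;1;0;2;0];[::1;2;2;1;1];[::2;2;2;0;0];[::0;2;0;0;1];[::0;2;0;1;1];[::1;2;1;0;0]];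
    [::[::0;1;1;0;1];[::2;1;0;2;1];[::2;1;2;2;1];[::0;2;2;2;2];[::0;0;2;0;2];[::2;1;2;1;2];[::1;2;2;0;1];[::2;0;1;2;1];[::2;0;1;1;2];[::0;0;1;2;0];[::1;1;1;0;2]];
    [::[::2;2;0;1;1];[::0;0;0;1;1];[::0;0;2;2;2];[::0;1;0;1;1];[::1;2;2;1;2];[::1;1;2;1;0];[::0;2;2;2;0];[::0;2;2;1;0];[::1;0;2;0;1];[::2;0;1;1;1];[::2;2;2;1;0]];
    [::[::2;1;2;2;0];[::0;1;0;1;0];[::0;2;2;0;1];[::0;2;2;0;0];[::0;0;2;0;0];[::2;0;0;1;2];[::2;2;0;1;0];[::1;2;0;0;2];[::0;0;1;1;0];[::2;2;2;0;2];[::0;0;1;0;2]]]].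

Definition Vlist := flatten (nth [::] net 0).

Definition linchk :=
  all (fun i : nat => all (fun j : nat => all (fun b : seq code => all (fun b' : seq code =>
     ((i == j) && (b == b')) || (size [seq z <- b | z \in b'] <= 1)%N)
     (nth [::] net j)) (nth [::] net i)) (iota 0 9)) (iota 0 9).

Definition check_all :=
  [&& size net == 9%N, all valid Vlist, zero3 \notin Vlist,
      all (fun c : code => (c == zero3) || ((c \in Vlist) != (neg3 c \in Vlist))) (codes 5),
      all (fun cl : seq (seq code) => [&& size cl == 11%N,
             all (fun b : seq code => (size b == 11%N) && (sum3 b == zero3)) cl,
             uniq (flatten cl) & perm_eq (flatten cl) Vlist]) net
    & linchk].

Lemma check_ok : check_all.
Proof. vm_compute. reflexivity. Qed.

Lemma flatten_uniq_disj (T : eqType) (s : seq (seq T)) b1 b2 c :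
  uniq (flatten s) -> b1 \in s -> b2 \in s -> c \in b1 -> c \in b2 -> b1 = b2.
Proof.
elim: s => [|b s IH] //=; rewrite cat_uniq => /and3P[ub dis us].
rewrite !inE => /orP[/eqP->|h1] /orP[/eqP->|h2] // hc1 hc2.
- case/negP: dis; apply/hasP; exists c => //; apply/flattenP; by exists b2.
- case/negP: dis; apply/hasP; exists c => //; apply/flattenP; by exists b1.
- exact: IH.
Qed.

Lemma two_in_size (T : eqType) (s : seq T) x y :
  x \in s -> y \in s -> x != y -> (1 < size s)%N.
Proof.
case: s => [|a [|b s]] //=; rewrite !inE => /eqP-> /eqP->; by rewrite eqxx.
Qed.

Section Main.
Variable F : finFieldType.
Variable g : 'rV['F_3]_5 -> F.
Hypothesis gD : forall a b, g (a + b) = g a + g b.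
Hypothesis g_inj : injective g.
Hypothesis g_surj : forall x, exists r, g r = x.

Local Notation phi := (phi g).

Lemma phi_add c d : size c = 5%N -> size d = 5%N -> phi (add3 c d) = phi c + phi d.
Proof. by move=> hc hd; rewrite /phi enc_add // gD. Qed.

Lemma phi_zero : phi zero3 = 0.
Proof. by rewrite /phi enc_zero (g0 gD). Qed.

Lemma size_sum3 b : all (fun c : code => size c == 5%N) b -> size (sum3 b) = 5%N.
Proof. elim: b => [|c b IH] // /andP[/eqP hc hb]; exact: (size_add3 hc (IH hb)). Qed.

Lemma phi_sum3 b : all (fun c : code => size c == 5%N) b ->
  \sum_(c <- b) phi c = phi (sum3 b).
Proof.
elim: b => [|c b IH] /=; first by rewrite big_nil phi_zero.
move=> /andP[/eqP hc hb]; rewrite big_cons IH // phi_add //; exact: size_sum3.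
Qed.

Lemma phi_inj c d : valid c -> valid d -> phi c = phi d -> c = d.
Proof. by move=> vc vd /g_inj; apply: enc_inj. Qed.

Lemma phi_neg c : valid c -> phi (neg3 c) = - phi c.
Proof.
case/andP=> /eqP sc ac; apply/eqP; rewrite -addr_eq0 addrC -phi_add //.
  by rewrite add3_neg // sc phi_zero.
by rewrite size_map.
Qed.

Lemma phi_surj x : exists c, valid c /\ phi c = x.
Proof.
have [r <-] := g_surj x; have [c [vc ec]] := enc_surj r.
by exists c; rewrite /phi ec.
Qed.

Definition Vset : {set F} := [set x | x \in map phi Vlist].
Definition blk (b : seq code) : {set F} := [set x | x \in map phi b].
Definition Pset (i : 'I_9) : {set {set F}} :=
  [set B : {set F} | B \in map blk (nth [::] net i)].

Lemma chk_parts : size net = 9%N /\ [/\ all valid Vlist, zero3 \notin Vlist,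
      all (fun c : code => (c == zero3) || ((c \in Vlist) != (neg3 c \in Vlist))) (codes 5),
      all (fun cl : seq (seq code) => [&& size cl == 11%N,
             all (fun b : seq code => (size b == 11%N) && (sum3 b == zero3)) cl,
             uniq (flatten cl) & perm_eq (flatten cl) Vlist]) net
    & linchk].
Proof. by have := check_ok; case/andP => /eqP -> /and5P. Qed.

Lemma cls_prop (i : 'I_9) : let cl := nth [::] net i in
  [&& size cl == 11%N,
      all (fun b : seq code => (size b == 11%N) && (sum3 b == zero3)) cl,
      uniq (flatten cl) & perm_eq (flatten cl) Vlist].
Proof.
have [hs [_ _ _ hc _]] := chk_parts.
by apply: (allP hc); apply: mem_nth; rewrite hs.
Qed.

Lemma valid_in (i : 'I_9) b c : b \in nth [::] net i -> c \in b -> valid c.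
Proof.
move=> hb hc; have [_ [hV _ _ _ _]] := chk_parts; apply: (allP hV).
have /and4P[_ _ _ hp] := cls_prop i.
by rewrite -(perm_mem hp); apply/flattenP; exists b.
Qed.

Lemma uniq_flatten_mem (T : eqType) (s : seq (seq T)) b :
  uniq (flatten s) -> b \in s -> uniq b.
Proof.
elim: s => [|a s IH] //=; rewrite cat_uniq => /and3P[ua _ us].
by rewrite inE => /orP[/eqP->|]; [|exact: IH].
Qed.

Lemma valid_neg c : valid c -> valid (neg3 c).
Proof.
case/andP=> sc _; rewrite /valid size_map sc /=; apply/allP => x /mapP[a _ ->].
by rewrite ltn_pmod.
Qed.

Lemma memV c : valid c -> (phi c \in Vset) = (c \in Vlist).
Proof.
move=> vc; rewrite inE; apply/mapP/idP => [[d hd e]|h]; last by exists c.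
have [_ [hV _ _ _ _]] := chk_parts.
by rewrite (phi_inj vc (allP hV d hd) e).
Qed.

Lemma half_ok : half_set Vset.
Proof.
have [_ [hV h0 hh _ _]] := chk_parts.
split.
  rewrite inE; apply/mapP => [[c hc e]].
  have vc := allP hV c hc.
  have : phi c = phi zero3 by rewrite phi_zero.
  move/(phi_inj vc (isT : valid zero3)) => ec.
  by move: h0; rewrite -ec hc.
move=> x nx; have [c [vc ex]] := phi_surj x; rewrite -ex -phi_neg //.
rewrite !memV ?valid_neg //.
have := allP hh c (codes_mem (eqP (proj1 (andP vc))) (proj2 (andP vc))).
case/orP => // /eqP ec; move: nx; by rewrite -ex ec phi_zero eqxx.
Qed.

Lemma memP (i : 'I_9) B : (B \in Pset i) = (B \in map blk (nth [::] net i)).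
Proof. by rewrite inE. Qed.

Lemma system_ok (i : 'I_9) : heffter_system Vset 11 (Pset i).
Proof.
have /and4P[hs hb hu hp] := cls_prop i.
split.
  apply/and3P; split.
  - apply/eqP/setP => x; apply/bigcupP/idP.
      move=> [B]; rewrite memP => /mapP[b hbi ->]; rewrite inE => /mapP[c hc ->].
      rewrite inE; apply: map_f; rewrite -(perm_mem hp); apply/flattenP; by exists b.
    rewrite inE => /mapP[c hc ->]; move: hc; rewrite -(perm_mem hp) => /flattenP[b hbi hc].
    exists (blk b); first by rewrite memP map_f.
    by rewrite inE map_f.
  - apply/trivIsetP => A B; rewrite !memP => /mapP[b1 h1 ->] /mapP[b2 h2 ->] neq.
    rewrite -setI_eq0; apply/eqP/setP => x; rewrite !inE; apply/negP => /andP[].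
    move=> /mapP[c1 hc1 ->] /mapP[c2 hc2 e].
    have ec := phi_inj (valid_in h1 hc1) (valid_in h2 hc2) e.
    rewrite -ec in hc2.
    by move: neq; rewrite (flatten_uniq_disj hu h1 h2 hc1 hc2) eqxx.
  - rewrite memP; apply/negP => /mapP[b hbi e].
    have /andP[/eqP sb _] := allP hb b hbi.
    case: b sb hbi e => [|c b] // _ hbi e.
    have : phi c \in blk (c :: b) by rewrite inE map_f // mem_head.
    by rewrite -e inE.
move=> B; rewrite memP => /mapP[b hbi ->].
have /andP[/eqP sb /eqP s0] := allP hb b hbi.
have ub := uniq_flatten_mem hu hbi.
have ui : {in b &, injective phi}.
  by move=> c d hc hd; apply: phi_inj; [exact: (valid_in hbi hc) | exact: (valid_in hbi hd)].
split.
  have um : uniq (map phi b) by rewrite map_inj_in_uniq.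
  by rewrite /blk cardsE (card_uniqP um) size_map.
rewrite (eq_bigl (fun x => x \in map phi b)); last by move=> x; rewrite inE.
rewrite -big_uniq ?map_inj_in_uniq // big_map phi_sum3 ?s0 ?phi_zero //.
by apply/allP => c hc; have /andP[] := valid_in hbi hc.
Qed.

Lemma lin_ok (i j : 'I_9) (B B' : {set F}) (x y : F) :
  B \in Pset i -> B' \in Pset j -> x != y ->
  x \in B -> y \in B -> x \in B' -> y \in B' -> i = j /\ B = B'.
Proof.
rewrite !memP => /mapP[b hb ->] /mapP[b' hb' ->] nxy.
rewrite !inE => /mapP[cx hx ex] /mapP[cy hy ey] /mapP[cx' hx' ex'] /mapP[cy' hy' ey'].
have e1 : cx = cx' by apply: phi_inj (valid_in hb hx) (valid_in hb' hx') _; rewrite -ex -ex'.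
have e2 : cy = cy' by apply: phi_inj (valid_in hb hy) (valid_in hb' hy') _; rewrite -ey -ey'.
subst cx' cy'.
have nc : cx != cy by apply: contraNneq nxy => e; rewrite ex ey e.
have [_ [_ _ _ _ hl]] := chk_parts.
have := allP (allP (allP (allP hl i _) j _) b hb) b' hb'.
rewrite !mem_iota /= !ltn_ord => /(_ isT isT).
case/orP => [/andP[/eqP eij /eqP ebb]|hsz].
  by split; [apply: val_inj | rewrite ebb].
have := two_in_size (x := cx) (y := cy) (s := [seq z <- b | z \in b']).
by rewrite !mem_filter hx hy hx' hy' => /(_ isT isT nc); rewrite ltnNge hsz.
Qed.

End Main.

Theorem theorem5p3 (F : finFieldType) (hF : #|F| = (3 ^ 5)%N) :
  has_heffter_net F 11 9.
Proof.
have c3 : (3 \in [pchar F])%N := card_finPcharP hF isT.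
have hl : logn 3 #|pPrimeCharType c3| = 5%N.
  by rewrite (_ : #|pPrimeCharType c3| = #|F|) // hF.
move: (pprimeChar_vectAxiom c3); rewrite hl => -[v2r lin [r2v K1 K2]].
pose g : 'rV['F_3]_5 -> F := r2v.
have gD : forall a b, g (a + b) = g a + g b.
  move=> a b; apply: (can_inj K1); rewrite /g K2.
  by have := lin 1 (r2v a) (r2v b); rewrite !scale1r !K2 => <-.
have g_inj : injective g by apply: (can_inj K2).
have g_surj : forall x, exists r, g r = x by move=> x; exists (v2r x); rewrite /g K1.
exists (Vset g), (Pset g); split; first by rewrite hF.
split; first exact: half_ok.
split; first by move=> i; exact: system_ok.
exact: lin_ok.
Qed.
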